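(* Fix a problem instance $x$. Suppose the domain $\mathcal{A}\times\mathcal{W}$ is partitioned into $N$ connected sets $R_{x,1},\dots,R_{x,N}$ and that for each $i\in[N]$ there is a constant $c_{x,i}$ with $f_x(\alpha,w)=c_{x,i}$ for all $(\alpha,w)\in R_{x,i}$. Then there are $O(N)$ points $\alpha_{\min}=\alpha_0<\alpha_1<\dots<\alpha_t=\alpha_{\max}$, $t=O(N)$, such that the dual utility function $u^*_x(\alpha)=\sup_{w\in\mathcal{W}}f_x(\alpha,w)$ is constant on each open interval $(\alpha_j,\alpha_{j+1})$. In particular $u^*_x$ has $O(N)$ discontinuity points and is piecewise constant with $O(N)$ pieces.
   Context: Setting: $\mathcal{X}$ is a set of problem instances, $\mathcal{A}=[\alpha_{\min},\alpha_{\max}]\subset\mathbb{R}$ is the hyperparameter domain, $\mathcal{W}=[w_{\min},w_{\max}]^d\subset\mathbb{R}^d$ is the parameter domain, and $f:\mathcal{X}\times\mathcal{A}\times\mathcal{W}\to[0,H]$. For fixed $x$, the parameter-dependent dual function is $f_x(\alpha,w):=f(x,\alpha,w)$ and the dual utility function is $u^*_x(\alpha):=\sup_{w\in\mathcal{W}}f_x(\alpha,w)$. *)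

(* Defs.v *)
From HB Require Import structures.
From mathcomp Require Import all_boot all_order all_algebra.
From mathcomp Require Import all_classical all_reals all_analysis.
Set Implicit Arguments. Unset Strict Implicit. Unset Printing Implicit Defensive.
Import Order.TTheory GRing.Theory Num.Theory.
Import numFieldNormedType.Exports.
Local Open Scope classical_set_scope.
Local Open Scope ring_scope.

Definition param_dom (R : realType) (d : nat) (wmin wmax : R) : set 'rV[R]_d :=
  [set w | forall i : 'I_d, wmin <= w ord0 i <= wmax].

Definition full_dom (R : realType) (d : nat) (amin amax wmin wmax : R)
  : set (R * 'rV[R]_d) :=
  [set p | amin <= p.1 <= amax /\ param_dom wmin wmax p.2].

Definition dual_utility (R : realType) (d : nat) (wmin wmax : R)
  (fx : R -> 'rV[R]_d -> R) (a : R) : R :=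
  sup [set fx a w | w in param_dom wmin wmax].

(* Main.v *)
Require Import Defs.
From HB Require Import structures.
From mathcomp Require Import all_boot all_order all_algebra.
From mathcomp Require Import all_classical all_reals all_analysis.
From mathcomp Require Import zify.
Import Order.TTheory GRing.Theory Num.Theory.
Import numFieldNormedType.Exports.
Local Open Scope classical_set_scope.
Local Open Scope ring_scope.

Lemma cross (R : realType) (E : set R) (m M lo hi a b : R) :
  is_interval E -> (forall y, E y -> m <= y <= M) ->
  lo < a < hi -> lo < b < hi -> E a -> ~ E b ->
  (lo < sup E < hi) \/ (lo < inf E < hi).
Proof.
move=> Ei Eb /andP[la ah] /andP[lb bh] Ea Nb.
have hs : has_sup E by split; [exists a | exists M => y /Eb /andP[]].
have hi' : has_inf E by split; [exists a | exists m => y /Eb /andP[]].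
case: (ltgtP a b) => [ab|ba|eab]; last by subst.
- left; have ar : a <= sup E by apply: sup_upper_bound.
  have rb : sup E <= b.
    rewrite leNgt; apply/negP => br.
    have ep : 0 < sup E - b by rewrite subr_gt0.
    have [e Ee] := sup_adherent ep hs.
    rewrite subKr => be.
    by apply: Nb; apply: (Ei a e) => //; rewrite (ltW ab) (ltW be).
  by rewrite (lt_le_trans la ar) (le_lt_trans rb bh).
- right; have ra : inf E <= a by apply: ge_inf => //; case: hi'.
  have br : b <= inf E.
    rewrite leNgt; apply/negP => rb.
    have ep : 0 < b - inf E by rewrite subr_gt0.
    have [e Ee] := inf_adherent ep hi'.
    rewrite addrC subrK => eb.
    by apply: Nb; apply: (Ei e a) => //; rewrite (ltW eb) (ltW ba).
  by rewrite (lt_le_trans lb br) (le_lt_trans ra ah).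
Qed.
Lemma proj_interval (R : realType) (d : nat) (A : set (R * 'rV[R]_d)) :
  connected A -> is_interval (fst @` A).
Proof.
move=> cA; apply/connected_intervalP.
apply: connected_continuous_connected => //.
apply: continuous_subspaceT => p; exact: cvg_fst.
Qed.

Lemma sorted_nth_lt (R : realType) (s : seq R) i j :
  sorted <%R s -> (i < j)%N -> (j < size s)%N -> nth 0 s i < nth 0 s j.
Proof.
move=> ss ij js; apply: (sorted_ltn_nth lt_trans) => //.
  by rewrite inE (ltn_trans ij js).
Qed.

Lemma sorted_nth_le (R : realType) (s : seq R) i j :
  sorted <%R s -> (i <= j)%N -> (j < size s)%N -> nth 0 s i <= nth 0 s j.
Proof.
move=> ss; rewrite leq_eqVlt => /orP[/eqP->//|ij] js.
by rewrite ltW // sorted_nth_lt.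
Qed.

Theorem mainTheorem4 :
  exists C : nat,
  forall (R : realType) (X : Type) (d : nat) (amin amax wmin wmax H : R)
    (f : X -> R -> 'rV[R]_d -> R) (x : X) (N : nat)
    (Rg : 'I_N -> set (R * 'rV[R]_d)) (c : 'I_N -> R),
    amin < amax -> wmin <= wmax ->
    (forall x' a w, amin <= a <= amax -> param_dom wmin wmax w ->
        0 <= f x' a w <= H) ->
    (forall i, Rg i `<=` full_dom amin amax wmin wmax) ->
    (forall p, full_dom amin amax wmin wmax p -> exists i, Rg i p) ->
    (forall i j, i != j -> Rg i `&` Rg j = set0) ->
    (forall i, connected (Rg i)) ->
    (forall i p, Rg i p -> f x p.1 p.2 = c i) ->
    exists (t : nat) (alpha : nat -> R),
      (t <= C * N)%N /\
      alpha 0%N = amin /\ alpha t = amax /\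
      (forall j, (j < t)%N -> alpha j < alpha j.+1) /\
      (forall j, (j < t)%N -> exists u : R, forall a, alpha j < a < alpha j.+1 ->
          dual_utility wmin wmax (f x) a = u).
Proof.
exists 3%N => R X d amin amax wmin wmax H f x N Rg c alt wle _ sub cover _ conn fc.
pose P i := fst @` Rg i.
have Pint i : is_interval (P i) by apply: proj_interval.
have Pb i y : P i y -> amin <= y <= amax.
  by case=> q /sub [+ _] <-.
have N0 : (0 < N)%N.
  have [i _] : exists i, Rg i (amin, const_mx wmin).
    apply: cover; split; first by rewrite /= lexx ltW.
    by move=> k; rewrite /= mxE lexx.
  by case: i => m mN; exact: leq_ltn_trans (leq0n m) mN.
pose ends := [seq inf (P i) | i <- enum 'I_N] ++ [seq sup (P i) | i <- enum 'I_N].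
pose s := sort <=%R (undup [seq p <- ends | amin < p < amax]).
pose pts := amin :: rcons s amax.
have memS p : (p \in s) = (p \in ends) && (amin < p < amax).
  by rewrite mem_sort mem_undup mem_filter andbC.
have sinside : all (fun p => amin < p) s.
  by apply/allP => p; rewrite memS => /andP[_ /andP[]].
have ss : sorted <%R s by rewrite sort_lt_sorted undup_uniq.
have spts : sorted <%R pts.
  rewrite /pts /= rcons_path path_sortedE ?sinside ?ss //=; last exact: lt_trans.
  have := mem_last amin s; rewrite inE => /orP[/eqP->//|].
  by rewrite memS => /andP[_ /andP[]].
have sz : size pts = (size s).+2 by rewrite /= size_rcons.
exists (size s).+1, (fun j => nth 0 pts j); split.
  have : (size s <= N + N)%N.
    rewrite size_sort (leq_trans (size_undup _)) // size_filter.
    by rewrite (leq_trans (count_size _ _)) // size_cat !size_map -enumT size_enum_ord.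
  by move=> h; lia.
split; first by [].
split; first by rewrite /= nth_rcons ltnn eqxx.
have ltj j : (j < (size s).+1)%N -> nth 0 pts j < nth 0 pts j.+1.
  by move=> jt; apply: sorted_nth_lt; rewrite // sz.
split; first exact: ltj.
move=> j jt.
have lo : amin <= nth 0 pts j by have := (@sorted_nth_le R pts 0 j spts (leq0n j)); rewrite sz => /(_ (ltn_trans jt (ltnSn _))).
have hi : nth 0 pts j.+1 <= amax.
  have := (@sorted_nth_le R pts j.+1 (size s).+1 spts jt); rewrite sz ltnSn => /(_ isT).
  by rewrite /pts /= (nth_rcons _ _ _ (size s)) ltnn eqxx.
have gap p : p \in s -> ~ (nth 0 pts j < p < nth 0 pts j.+1).
  move=> ps /andP[h1 h2].
  have pp : p \in pts by rewrite /pts inE mem_rcons inE ps !orbT.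
  have kp := nth_index 0 (s:=pts) pp; have ks : (index p pts < size pts)%N by rewrite index_mem.
  move: (index p pts) kp ks => k kp ks.
  case: (ltnP k j.+1) => kj.
    have := (@sorted_nth_le R pts k j spts); rewrite -ltnS kj (ltn_trans jt) ?sz // kp => /(_ isT isT).
    by rewrite leNgt h1.
  have := (@sorted_nth_le R pts j.+1 k spts kj ks); rewrite kp.
  by rewrite leNgt h2.
have inside a : nth 0 pts j < a < nth 0 pts j.+1 -> amin <= a <= amax.
  by move=> /andP[h1 h2]; rewrite (le_trans lo (ltW h1)) (le_trans (ltW h2) hi).
have trans a b i : nth 0 pts j < a < nth 0 pts j.+1 ->
    nth 0 pts j < b < nth 0 pts j.+1 -> P i a -> P i b.
  move=> ha hb Pa; apply: contrapT => Pnb.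
  have [/andP[h1 h2]|/andP[h1 h2]] := @cross R (P i) amin amax _ _ a b (Pint i) (Pb i) ha hb Pa Pnb.
  - apply: (gap (sup (P i))) => //; last by rewrite h1 h2.
    rewrite memS; apply/andP; split.
      by rewrite /ends mem_cat; apply/orP; right; apply: map_f; rewrite mem_enum.
    by rewrite (le_lt_trans lo h1) (lt_le_trans h2 hi).
  - apply: (gap (inf (P i))) => //; last by rewrite h1 h2.
    rewrite memS; apply/andP; split.
      by rewrite /ends mem_cat; apply/orP; left; apply: map_f; rewrite mem_enum.
    by rewrite (le_lt_trans lo h1) (lt_le_trans h2 hi).
have incl a b : nth 0 pts j < a < nth 0 pts j.+1 ->
    nth 0 pts j < b < nth 0 pts j.+1 ->
    [set f x a w | w in param_dom wmin wmax] `<=` [set f x b w | w in param_dom wmin wmax].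
  move=> ha hb v [w Ww <-].
  have [i Ri] := cover (a, w) (conj (inside a ha) Ww).
  have [q Rq qb] := trans a b i ha hb (ex_intro2 _ _ (a, w) Ri erefl).
  exists q.2; first by have [_ ] := sub i q Rq.
  by rewrite -qb (fc i q Rq) -(fc i _ Ri).
pose m := (nth 0 pts j + nth 0 pts j.+1) / 2.
have hm : nth 0 pts j < m < nth 0 pts j.+1.
  have [h1 h2] := midf_lt (ltj j jt); apply/andP; split; [exact: h1|exact: h2].
exists (dual_utility wmin wmax (f x) m) => a ha.
rewrite /dual_utility; congr sup; apply/seteqP; split; exact: incl.
Qed.
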